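(* For procedure $\mathcal{G}_{APL}(p,\mathrm{lb},\beta,\theta)$, run with any $\alpha_k\in(0,1]$ and with $\mathrm{lb}\le f^*$, the following hold: (a) $\{X'_k\}_{k\ge0}$ is a sequence of localizers of $\mathcal{L}_f(l)$; (b) $\underline f_0\le\underline f_1\le\cdots\le\underline f_k\le f^*$ and $\overline f_0\ge\overline f_1\ge\cdots\ge\overline f_k\ge f^*$ for any $k\ge1$; (c) the problem defining $x_k$ in Step 2 is always feasible unless the procedure terminates; (d) $\emptyset\ne\underline X_k\subseteq\overline X_k$ for any $k\ge1$, so Step 4 is always feasible unless the procedure terminates; (e) whenever the procedure terminates, $f(p^+)-\mathrm{lb}^+\le q\,[f(p)-\mathrm{lb}]$, where $q\equiv q(\beta,\theta):=1-(1-\theta)\min\{\beta,1-\beta\}$.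
   Context: Problem: $f^*=\min_{x\in X}f(x)$, $X\subseteq\mathbb{R}^n$ nonempty convex compact, $\mathbb{R}^n$ with an arbitrary norm $\|\cdot\|$; $f:X\to\mathbb{R}$ convex with oracle returning $f(x)$ and $f'(x)\in\partial f(x)$; $h(z,x):=f(z)+\langle f'(z),x-z\rangle$; $\mathcal{L}_f(l):=\{x\in X:f(x)\le l\}$; a localizer of $\mathcal{L}_f(l)$ is a convex compact set $X'$ with $\mathcal{L}_f(l)\subseteq X'\subseteq X$. $\omega:X\to\mathbb{R}$ is a prox-function: differentiable and strongly convex with modulus $\sigma_\omega>0$, i.e. $\langle\nabla\omega(x)-\nabla\omega(z),x-z\rangle\ge\sigma_\omega\|x-z\|^2$ on $X$. Procedure $\mathcal{G}_{APL}(p,\mathrm{lb},\beta,\theta)$ ($p\in X$, $\beta,\theta\in(0,1)$, given $\alpha_k\in(0,1]$): Step 0: $x^u_0=p$, $\overline f_0=f(p)$, $\underline f_0=\mathrm{lb}$, $l=\beta\underline f_0+(1-\beta)\overline f_0$; choose $x_0\in X$ and an initial localizer $X'_0$ of $\mathcal{L}_f(l)$ (e.g. $x_0=p$, $X'_0=X$); $d_\omega(x)=\omega(x)-[\omega(x_0)+\langle\nabla\omega(x_0),x-x_0\rangle]$; $k=1$. Step 1: $x^l_k=(1-\alpha_k)x^u_{k-1}+\alpha_kx_{k-1}$, $\underline h_k=\min_{x\in X'_{k-1}}h(x^l_k,x)$ ($+\infty$ if infeasible), $\underline f_k=\max\{\underline f_{k-1},\min\{l,\underline h_k\}\}$; if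 $\underline f_k\ge l-\theta(l-\underline f_0)$ terminate with $p^+=x^u_{k-1}$, $\mathrm{lb}^+=\underline f_k$. Step 2: $x_k=\operatorname{argmin}_{x\in X'_{k-1}}\{d_\omega(x):h(x^l_k,x)\le l\}$. Step 3: $\overline f_k=\min\{\overline f_{k-1},f(\alpha_kx_k+(1-\alpha_k)x^u_{k-1})\}$, choose $x^u_k$ with $f(x^u_k)=\overline f_k$; if $\overline f_k\le l+\theta(\overline f_0-l)$ terminate with $p^+=x^u_k$, $\mathrm{lb}^+=\underline f_k$. Step 4: choose a closed convex set $X'_k$ with $\underline X_k\subseteq X'_k\subseteq\overline X_k$, where $\underline X_k:=\{x\in X'_{k-1}:h(x^l_k,x)\le l\}$ and $\overline X_k:=\{x\in X:\langle\nabla d_\omega(x_k),x-x_k\rangle\ge0\}$. Step 5: $k\leftarrow k+1$, go to Step 1. *)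

(* Defs.v *)
From HB Require Import structures.
From mathcomp Require Import all_boot all_order all_algebra.
From mathcomp Require Import all_classical all_reals all_analysis.
Set Implicit Arguments. Unset Strict Implicit. Unset Printing Implicit Defensive.
Import Order.TTheory GRing.Theory Num.Theory.
Import numFieldNormedType.Exports.
Local Open Scope classical_set_scope.
Local Open Scope ring_scope.

Section APL.
Context {R : realType} {n : nat}.
Local Notation V := 'rV[R]_n.

Definition dot (u v : V) : R := \sum_(i < n) u ord0 i * v ord0 i.

Definition is_norm (N : V -> R) : Prop :=
  [/\ forall x, 0 <= N x, forall x, N x = 0 -> x = 0,
      forall (a : R) x, N (a *: x) = `|a| * N x
    & forall x y, N (x + y) <= N x + N y].

Definition cvx_set (A : set V) : Prop :=
  forall x y (t : R), A x -> A y -> 0 <= t <= 1 -> A (t *: x + (1 - t) *: y).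

Definition convex_on (A : set V) (f : V -> R) : Prop :=
  forall x y (t : R), A x -> A y -> 0 <= t <= 1 ->
    f (t *: x + (1 - t) *: y) <= t * f x + (1 - t) * f y.

Definition subgrad_oracle (A : set V) (f : V -> R) (f' : V -> V) : Prop :=
  forall x y, A x -> A y -> f x + dot (f' x) (y - x) <= f y.

Definition hcut (f : V -> R) (f' : V -> V) (z x : V) : R := f z + dot (f' z) (x - z).

Definition level (A : set V) (f : V -> R) (l : R) : set V := [set x | A x /\ f x <= l].

Definition localizer (A : set V) (f : V -> R) (l : R) (X' : set V) : Prop :=
  [/\ cvx_set X', compact X', level A f l `<=` X' & X' `<=` A].

Definition prox_function (A : set V) (N : V -> R) (w : V -> R) (gw : V -> V)
  (sigma : R) : Prop :=
  [/\ 0 < sigma,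
      forall x, A x -> differentiable w x /\ forall u, 'd w x u = dot (gw x) u
    & forall x z, A x -> A z -> sigma * N (x - z) ^+ 2 <= dot (gw x - gw z) (x - z)].

Definition fstar (A : set V) (f : V -> R) : R := inf [set f x | x in A].

Definition d_omega (w : V -> R) (gw : V -> V) (x0 x : V) : R :=
  w x - (w x0 + dot (gw x0) (x - x0)).
Definition grad_d_omega (gw : V -> V) (x0 x : V) : V := gw x - gw x0.

Definition qfactor (beta theta : R) : R := 1 - (1 - theta) * Num.min beta (1 - beta).

(* A trace of the procedure G_APL: the successive values of
   x^l_k, x_k, x^u_k, underline f_k, overline f_k, X'_k. *)
Record apl_trace := APLTrace {
  xl : nat -> V; xs : nat -> V; xu : nat -> V;
  flo : nat -> R; fup : nat -> R; Xp : nat -> set V }.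

Variables (X : set V) (f : V -> R) (f' : V -> V) (w : V -> R) (gw : V -> V)
  (p : V) (lb beta theta : R) (alpha : nat -> R) (T : apl_trace).

(* level l = beta * underline f_0 + (1 - beta) * overline f_0 *)
Definition apl_level : R := beta * lb + (1 - beta) * f p.
Local Notation l := apl_level.

Definition apl_init : Prop :=
  [/\ xu T 0 = p, fup T 0 = f p, flo T 0 = lb, X (xs T 0) & localizer X f l (Xp T 0)].

(* v = min{l, min_{x in A} h(z, x)}, with min over the empty set = +infinity *)
Definition min_l_h (A : set V) (z : V) (v : R) : Prop :=
  (A = set0 /\ v = l) \/
  (exists y0, [/\ A y0, forall y, A y -> hcut f f' z y0 <= hcut f f' z y
                      & v = Num.min l (hcut f f' z y0)]).

(* Step 1 of iteration k (k >= 1), before the termination test *)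
Definition apl_step1 (k : nat) : Prop :=
  xl T k = (1 - alpha k) *: xu T k.-1 + alpha k *: xs T k.-1 /\
  exists v, min_l_h (Xp T k.-1) (xl T k) v /\ flo T k = Num.max (flo T k.-1) v.

Definition apl_term1 (k : nat) : Prop := l - theta * (l - flo T 0) <= flo T k.

Definition ulX (k : nat) : set V := [set x | Xp T k.-1 x /\ hcut f f' (xl T k) x <= l].
Definition olX (k : nat) : set V :=
  [set x | X x /\ 0 <= dot (grad_d_omega gw (xs T 0) (xs T k)) (x - xs T k)].

Definition apl_step2 (k : nat) : Prop :=
  ulX k (xs T k) /\ forall y, ulX k y -> d_omega w gw (xs T 0) (xs T k) <= d_omega w gw (xs T 0) y.

Definition apl_step3 (k : nat) : Prop :=
  [/\ fup T k = Num.min (fup T k.-1) (f (alpha k *: xs T k + (1 - alpha k) *: xu T k.-1)),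
      X (xu T k) & f (xu T k) = fup T k].

Definition apl_term3 (k : nat) : Prop := fup T k <= l + theta * (fup T 0 - l).

Definition apl_step4 (k : nat) : Prop :=
  [/\ closed (Xp T k), cvx_set (Xp T k), ulX k `<=` Xp T k & Xp T k `<=` olX k].

Definition apl_full_iter (k : nat) : Prop :=
  [/\ apl_step1 k, ~ apl_term1 k, apl_step2 k, apl_step3 k & ~ apl_term3 k /\ apl_step4 k].

Definition apl_completed (K : nat) : Prop :=
  apl_init /\ forall k, (0 < k <= K)%N -> apl_full_iter k.

End APL.

(* Main.v *)
Require Import Defs.
From HB Require Import structures.
From mathcomp Require Import all_boot all_order all_algebra.
From mathcomp Require Import all_classical all_reals all_analysis.
From mathcomp Require Import lra.
Import Order.TTheory GRing.Theory Num.Theory.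
Import numFieldNormedType.Exports.
Local Open Scope classical_set_scope.
Local Open Scope ring_scope.

Section H.
Context {R : realType} {n : nat}.
Implicit Types (u v x y : 'rV[R]_n).

Lemma dotDr u x y : dot u (x + y) = dot u x + dot u y.
Proof. by rewrite /dot -big_split; apply: eq_bigr => i _; rewrite mxE mulrDr. Qed.
Lemma dotZr u a x : dot u (a *: x) = a * dot u x.
Proof. by rewrite /dot mulr_sumr; apply: eq_bigr => i _; rewrite mxE mulrCA. Qed.
Lemma dotNr u x : dot u (- x) = - dot u x.
Proof. by rewrite -scaleN1r dotZr mulN1r. Qed.
Lemma dotBr u x y : dot u (x - y) = dot u x - dot u y.
Proof. by rewrite dotDr dotNr. Qed.
Lemma dotDl u v x : dot (u + v) x = dot u x + dot v x.
Proof. by rewrite /dot -big_split; apply: eq_bigr => i _; rewrite mxE mulrDl. Qed.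
Lemma dotNl u x : dot (- u) x = - dot u x.
Proof. by rewrite /dot -sumrN; apply: eq_bigr => i _; rewrite mxE mulNr. Qed.
Lemma dotBl u v x : dot (u - v) x = dot u x - dot v x.
Proof. by rewrite dotDl dotNl. Qed.

Lemma coord_le_norm x i : `|x ord0 i| <= `|x|.
Proof.
have -> : `|x| = mx_norm x by [].
rewrite mx_normE -[leLHS]nngE num_le; exact: (le_bigmax _ _ (ord0, i)).
Qed.

Lemma dot_lbound (c : 'rV[R]_n) (A : set 'rV[R]_n) : compact A ->
  exists M : R, forall x, A x -> - M <= dot c x.
Proof.
move=> /compact_bounded [M0 [_ HM]].
exists ((M0 + 1) * \sum_(i < n) `|c ord0 i|) => x Ax.
have Hx : `|x| <= M0 + 1 by apply: (HM (M0 + 1)); [rewrite ltrDl|].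
have H : `|dot c x| <= (M0 + 1) * \sum_(i < n) `|c ord0 i|.
  apply: le_trans (ler_norm_sum _ _ _) _.
  rewrite mulr_sumr; apply: ler_sum => i _.
  rewrite normrM mulrC ler_wpM2r //; apply: le_trans (coord_le_norm _ _) Hx.
by move: H; rewrite ler_norml => /andP[].
Qed.
End H.
Section O.
Context {R : realType} {n : nat}.
Local Notation V := 'rV[R]_n.
Lemma opt_cond (A : set V) (w : V -> R) (gw : V -> V) x0 xs x :
  cvx_set A -> A xs -> A x -> differentiable w xs ->
  (forall u, 'd w xs u = dot (gw xs) u) ->
  (forall y, A y -> d_omega w gw x0 xs <= d_omega w gw x0 y) ->
  0 <= dot (gw xs - gw x0) (x - xs).
Proof.
move=> cA Axs Ax dw Hd Hmin.
rewrite leNgt; apply/negP => Hc.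
set v := x - xs.
have Hcv : (fun h : R => h^-1 *: ((w \o shift xs) (h *: v) - w xs)) @ 0^' --> 'D_v w xs.
  exact: diff_derivable.
rewrite deriveE // Hd in Hcv.
have Hlt : dot (gw xs) v < dot (gw x0) v by rewrite -subr_lt0 -dotBl.
have := cvgr_lt _ Hcv _ Hlt.
move=> Hnear.
have Hr : \forall h \near (0:R)^'+, [/\ 0 < h, h < 1 &
     h^-1 *: ((w \o shift xs) (h *: v) - w xs) < dot (gw x0) v].
  near=> h; split.
  - by near: h; exact: nbhs_right_gt.
  - by near: h; exact: nbhs_right_lt.
  - near: h. move: Hnear; rewrite /dnbhs /= !near_withinE.
    move=> H; apply: filterS (H _) => h Hh h0; by apply: Hh; rewrite /= gt_eqF.
have [h [h0 h1 Hh]] := filter_ex Hr.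
move: Hh => /=; rewrite [_ *: _]mulrC ltr_pdivrMr // => Hh.
set y := h *: v + xs in Hh.
have Ay : A y.
  have -> : y = h *: x + (1 - h) *: xs.
    by rewrite /y /v scalerBr scalerBl scale1r addrAC addrA.
  by apply: (cA x xs h) => //; rewrite !ltW.
have := Hmin _ Ay; rewrite /d_omega.
have -> : y - x0 = h *: v + (xs - x0) by rewrite /y addrA.
rewrite [dot _ (h *: v + _)]dotDr dotZr.
move: Hh; rewrite mulrC; lra.
Unshelve. all: by end_near.
Qed.

End O.

Theorem lemma3p2 (R : realType) (n : nat) (N : 'rV[R]_n -> R) (X : set 'rV[R]_n)
  (f : 'rV[R]_n -> R) (f' : 'rV[R]_n -> 'rV[R]_n)
  (w : 'rV[R]_n -> R) (gw : 'rV[R]_n -> 'rV[R]_n) (sigma : R)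
  (p : 'rV[R]_n) (lb beta theta : R) (alpha : nat -> R) (T : @apl_trace R n) :
  is_norm N -> X !=set0 -> cvx_set X -> compact X ->
  convex_on X f -> subgrad_oracle X f f' -> prox_function X N w gw sigma ->
  X p -> 0 < beta < 1 -> 0 < theta < 1 ->
  (forall k, (0 < k)%N -> 0 < alpha k <= 1) ->
  lb <= fstar X f ->
  let l := apl_level f p lb beta in
  let run K := apl_completed X f f' w gw p lb beta theta alpha T K in
  let step1 k := apl_step1 f f' p lb beta alpha T k in
  let term1 k := apl_term1 f p lb beta theta T k in
  let step2 k := apl_step2 f f' w gw p lb beta T k in
  let step3 k := apl_step3 X f alpha T k in
  let term3 k := apl_term3 f p lb beta theta T k in
  (* (a) X'_k are localizers of L_f(l) *)
  [/\ (forall K, run K -> forall k, (k <= K)%N -> localizer X f l (Xp T k)),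
  (* (b) monotonicity of the lower and upper bounds *)
      (forall K, run K -> step1 K.+1 ->
         (forall k, (k <= K)%N -> flo T k <= flo T k.+1) /\ flo T K.+1 <= fstar X f) /\
      (forall K, run K -> step1 K.+1 -> ~ term1 K.+1 -> step2 K.+1 -> step3 K.+1 ->
         (forall k, (k <= K)%N -> fup T k.+1 <= fup T k) /\ fstar X f <= fup T K.+1),
  (* (c) Step 2 is feasible unless the procedure terminates *)
      (forall K, run K -> step1 K.+1 -> ~ term1 K.+1 ->
         ulX f f' p lb beta T K.+1 !=set0),
  (* (d) nonempty underline X_k contained in overline X_k *)
      (forall K, run K -> step1 K.+1 -> ~ term1 K.+1 -> step2 K.+1 ->
         ulX f f' p lb beta T K.+1 !=set0 /\
         ulX f f' p lb beta T K.+1 `<=` olX X gw T K.+1)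
  & (* (e) contraction of the gap upon termination *)
      (forall K, run K -> step1 K.+1 -> term1 K.+1 ->
         f (xu T K) - flo T K.+1 <= qfactor beta theta * (f p - lb)) /\
      (forall K, run K -> step1 K.+1 -> ~ term1 K.+1 -> step2 K.+1 -> step3 K.+1 ->
         term3 K.+1 ->
         f (xu T K.+1) - flo T K.+1 <= qfactor beta theta * (f p - lb))].

Proof.
move=> Nn [x1 Xx1] cX kX fconv sg prox Xp0 /andP[b0 b1] /andP[t0 t1] Hal Hlb.
move=> l run step1 term1 step2 step3 term3.
have [M HM] := @dot_lbound _ _ (f' p) X kX.
have hlb : has_lbound [set f x | x in X].
  exists (f p - M - dot (f' p) p) => _ [x Xx <-].
  have := sg p x Xp0 Xx; have := HM x Xx; rewrite dotBr; lra.
have fle : forall x, X x -> fstar X f <= f x.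
  by move=> x Xx; apply: (ge_inf hlb); exists x.
have gef : forall a, (forall x, X x -> a <= f x) -> a <= fstar X f.
  move=> a Ha; apply: lb_le_inf; first by exists (f x1), x1.
  by move=> _ [x Xx <-]; apply: Ha.
have lbp : lb <= f p by apply: le_trans Hlb (fle _ Xp0).
have ll : lb <= l.
  rewrite /l /apl_level.
  have : 0 <= (1 - beta) * (f p - lb) by apply: mulr_ge0; lra.
  lra.
have cvxA : forall k, (0 < k)%N -> X (xu T k.-1) -> X (xs T k.-1) ->
    xl T k = (1 - alpha k) *: xu T k.-1 + alpha k *: xs T k.-1 -> X (xl T k).
  move=> k k0 Hu Hs ->; have /andP[a0 a1] := Hal k k0.
  have := cX _ _ (1 - alpha k) Hu Hs; rewrite opprB addrCA subrr addr0.
  by apply; apply/andP; split; lra.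
have lowstep : forall k, (0 < k)%N -> X (xl T k) -> localizer X f l (Xp T k.-1) ->
    (forall x, X x -> flo T k.-1 <= f x) -> step1 k ->
    forall x, X x -> flo T k <= f x.
  move=> k k0 Xxl [_ _ lev _] Hprev [_ [v [Hv ->]]] x Xx.
  rewrite ge_max Hprev //=.
  have [fxl|lxf] := leP (f x) l.
  - have Xpx : Xp T k.-1 x by apply: lev.
    case: Hv => [[E _]|[y0 [_ Hy0 ->]]]; first by rewrite E in Xpx.
    rewrite ge_min; apply/orP; right.
    apply: le_trans (Hy0 _ Xpx) _; exact: sg.
  - case: Hv => [[_ ->]|[y0 [_ _ ->]]]; first exact: ltW.
    by rewrite ge_min (ltW lxf).
have nonemp : forall k, flo T 0 = lb -> step1 k -> ~ term1 k -> ulX f f' p lb beta T k !=set0.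
  move=> k F0 [_ [v [Hv Hflo]]] Ht.
  have Hcontra : l <= flo T k -> False.
    move=> H; apply: Ht; rewrite /term1 /apl_term1.
    apply: le_trans H; rewrite F0 -/l.
    have : 0 <= theta * (l - lb) by apply: mulr_ge0; lra.
    lra.
  case: Hv => [[_ Ev]|[y0 [Ay0 _ Ev]]].
    by exfalso; apply: Hcontra; rewrite Hflo Ev le_max lexx orbT.
  have [hy|hy] := leP (hcut f f' (xl T k) y0) l; first by exists y0.
  exfalso; apply: Hcontra; rewrite Hflo Ev le_max; apply/orP; right.
  by rewrite le_min lexx (ltW hy).
have inv : forall K, run K -> forall k, (k <= K)%N ->
   [/\ localizer X f l (Xp T k), X (xu T k), X (xs T k), f (xu T k) = fup T k &
      [/\ (forall x, X x -> flo T k <= f x), fup T k <= f p & lb <= flo T k]].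
  move=> K [[Hu0 Hf0 Hl0 Xs0 Loc0] Hit]; elim=> [_|k IH kK].
    rewrite Hu0 Hf0 Hl0; split=> //; split=> //.
    by move=> x Xx; apply: le_trans Hlb (fle _ Xx).
  have [Loc Xu Xs fu [flb fupp lbf]] := IH (ltnW kK).
  have [S1 _ [S2a _] [S3a S3b S3c] [_ [S4a S4b S4c S4d]]] := Hit k.+1 kK.
  have Xxl : X (xl T k.+1) by apply: cvxA => //; case: S1.
  have XpX : Xp T k.+1 `<=` X by move=> x /S4d [].
  split=> //; [|by case: Loc => _ _ _; apply; case: S2a|split].
  - split=> //; first exact: subclosed_compact S4a kX XpX.
    move=> x [Xx fx]; apply: S4c; split; first by case: Loc => _ _ + _; apply; split.
    apply: le_trans fx; exact: sg.
  - by move=> x Xx; apply: lowstep.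
  - by rewrite S3a ge_min fupp.
  - by case: S1 => _ [v [_ ->]]; rewrite le_max lbf.
have inv1 : forall K, run K -> step1 K.+1 -> X (xl T K.+1) /\ forall x, X x -> flo T K.+1 <= f x.
  move=> K rK S1.
  have [Loc Xu Xs _ [flb _ _]] := inv K rK K (leqnn K).
  have Xxl : X (xl T K.+1) by apply: cvxA => //; case: S1.
  by split=> //; apply: lowstep.
split.
- by move=> K rK k kK; case: (inv K rK k kK).
- split.
  + move=> K rK S1; split; last by apply: gef; case: (inv1 K rK S1).
    move=> k kK; have S1k : step1 k.+1.
      move: kK; rewrite leq_eqVlt => /orP[/eqP -> //|kK].
      by case: ((rK.2) k.+1 kK).
    by case: S1k => _ [v [_ ->]]; rewrite le_max lexx.
  + move=> K rK S1 _ _ S3; split; last by case: S3 => _ X3 <-; apply: fle.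
    move=> k kK; have S3k : step3 k.+1.
      move: kK; rewrite leq_eqVlt => /orP[/eqP -> //|kK].
      by case: ((rK.2) k.+1 kK).
    by case: S3k => -> _ _; rewrite ge_min lexx.
- by move=> K [[_ _ F0 _ _] _]; apply: nonemp.
- move=> K rK S1 Ht [S2a S2b]; split; first by apply: nonemp => //; case: rK => [[]].
  have [Loc _ _ _ _] := inv K rK K (leqnn K).
  have XsX : X (xs T K.+1) by case: Loc => _ _ _; apply; case: S2a.
  move=> x Ux; split; first by case: Loc => _ _ _; apply; case: Ux.
  rewrite /grad_d_omega.
  have [_ Hd _] := prox.
  have [dw dwE] := Hd _ XsX.
  apply: (@opt_cond _ _ (ulX f f' p lb beta T K.+1) w gw (xs T 0) (xs T K.+1) x _ S2a Ux dw dwE S2b).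
  move=> y z t [Py hy] [Pz hz] /andP[tt0 tt1]; split.
    by case: Loc => cvx _ _ _; apply: (cvx y z t) => //; apply/andP.
  move: hy hz; rewrite /hcut -/l !dotBr dotDr !dotZr => hy hz.
  have : 0 <= t * (l - (f (xl T K.+1) + (dot (f' (xl T K.+1)) y - dot (f' (xl T K.+1)) (xl T K.+1)))).
    by apply: mulr_ge0; lra.
  have : 0 <= (1 - t) * (l - (f (xl T K.+1) + (dot (f' (xl T K.+1)) z - dot (f' (xl T K.+1)) (xl T K.+1)))).
    by apply: mulr_ge0; lra.
  lra.
- split.
  + move=> K rK S1 Ht.
    have [_ _ _ fu [_ fupp _]] := inv K rK K (leqnn K).
    rewrite fu /qfactor; move: Ht; rewrite /term1 /apl_term1 -/l /l /apl_level.
    case: rK => [[_ _ -> _ _] _] => Ht.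
    have hm1 : Num.min beta (1 - beta) <= 1 - beta by rewrite ge_min lexx orbT.
    have : 0 <= (1 - theta) * ((1 - beta - Num.min beta (1 - beta)) * (f p - lb)).
      by apply: mulr_ge0; [lra|apply: mulr_ge0; lra].
    lra.
  + move=> K rK S1 Ht S2 S3 T3.
    have [_ _ _ _ [_ _ lbf]] := inv K rK K (leqnn K).
    have lbf1 : lb <= flo T K.+1 by case: S1 => _ [v [_ ->]]; rewrite le_max lbf.
    case: S3 => _ _ ->; move: T3; rewrite /term3 /apl_term3 -/l.
    case: rK => [[_ -> _ _ _] _] => T3.
    rewrite /qfactor /l /apl_level in T3 *.
    have hm1 : Num.min beta (1 - beta) <= beta by rewrite ge_min lexx.
    have : 0 <= (1 - theta) * ((beta - Num.min beta (1 - beta)) * (f p - lb)).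
      by apply: mulr_ge0; [lra|apply: mulr_ge0; lra].
    lra.
Qed.
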